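(* Let $\gamma>0$, $n\ge1$, and for each $k\in\{1,\dots,n\}$ let $\hat\gamma(k)$ be an estimator of $\gamma$ satisfying the bias–variance condition (described in the context) with functions $V$ and $B$. Fix $\delta\in(0,1)$ and a nonempty grid $\mathcal K\subset\{1,\dots,n\}$ such that $(\delta,n,\mathcal K)$ is a sufficiently wide grid. Define $E(k)=\gamma V(k,\delta)+B(k,n,\delta)$. Then for all integers $k$ with $1\le k\le k^*(\delta,n)$, $$E(k)\le \min_{1\le j\le n}E(j)+\gamma V(k,\delta).$$
   Context: Bias–variance condition: there exist functions $V:\mathbb N\times(0,1)\to\mathbb R_+$ and $B:\mathbb N\times\mathbb N\times(0,1)\to\mathbb R_+$ such that for every $\delta\in(0,1)$ and every $k\in\{1,\dots,n\}$, with probability at least $1-\delta$, $|\hat\gamma(k)-\gamma|\le \gamma V(k,\delta)+B(k,n,\delta)$; moreover (a) for each $\delta$, $k\mapsto V(k,\delta)$ is non-increasing and $V(k,\delta)\to 0$ as $k\to\infty$; (b) $B$ is non-negative, $k\mapsto B(k,n,\delta)$ is non-decreasing, and $B(k,n,\delta)\to0$ as $k/n\to 0$. Sufficiently wide grid: with $k_{\min}=\min\mathcal K$, $k_{\max}=\max\mathcal K$, $B(k_{\min},n,\delta)\le\gamma V(k_{\min},\delta)$ and $B(k_{\max},n,\delta)>\gamma V(k_{\max},\delta)$. Oracle: $k^*(\delta,n)=\max\{k\in\mathcal K: B(k,n,\delta)\le \gamma V(k,\delta)\}$. *)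

(* Defs.v *)
From HB Require Import structures.
From mathcomp Require Import all_boot all_order all_algebra.
From mathcomp Require Import all_classical all_reals all_analysis.
Set Implicit Arguments. Unset Strict Implicit. Unset Printing Implicit Defensive.
Import Order.TTheory GRing.Theory Num.Theory numFieldNormedType.Exports.
Local Open Scope ring_scope.
Local Open Scope classical_set_scope.

Definition bias_variance_condition (R : realType) (d : measure_display)
  (Omega : measurableType d) (P : probability Omega R)
  (gamma : R) (n : nat) (ghat : nat -> Omega -> R)
  (V : nat -> R -> R) (B : nat -> nat -> R -> R) : Prop :=
  (forall k (delta : R), (1 <= k)%N -> 0 < delta < 1 -> 0 <= V k delta) /\
  (forall k m (delta : R), (1 <= k)%N -> (1 <= m)%N -> 0 < delta < 1 -> 0 <= B k m delta) /\
  (forall (delta : R) k, 0 < delta < 1 -> (1 <= k <= n)%N ->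
     ((1 - delta)%:E <=
       P [set w : Omega | (`|ghat k w - gamma| <= gamma * V k delta + B k n delta)%R])%E) /\
  (forall delta : R, 0 < delta < 1 ->
     (forall k k', (1 <= k <= k')%N -> V k' delta <= V k delta) /\
     ((fun k : nat => V k delta) @ \oo --> (0 : R))) /\
  (forall delta : R, 0 < delta < 1 ->
     (forall m k k', (1 <= m)%N -> (1 <= k <= k')%N -> B k m delta <= B k' m delta) /\
     (forall eps : R, 0 < eps -> exists eta : R, 0 < eta /\
        forall k m, (1 <= k <= m)%N -> k%:R / m%:R < eta -> B k m delta < eps)).

Definition kmin (n : nat) (K : seq nat) : nat := \big[minn/n]_(k <- K) k.
Definition kmax (K : seq nat) : nat := \max_(k <- K) k.

Definition sufficiently_wide_grid (R : realType) (gamma : R)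
  (V : nat -> R -> R) (B : nat -> nat -> R -> R)
  (delta : R) (n : nat) (K : seq nat) : Prop :=
  B (kmin n K) n delta <= gamma * V (kmin n K) delta /\
  gamma * V (kmax K) delta < B (kmax K) n delta.

Definition kstar (R : realType) (gamma : R)
  (V : nat -> R -> R) (B : nat -> nat -> R -> R)
  (delta : R) (n : nat) (K : seq nat) : nat :=
  \max_(k <- K | B k n delta <= gamma * V k delta) k.

Definition Err (R : realType) (gamma : R)
  (V : nat -> R -> R) (B : nat -> nat -> R -> R)
  (delta : R) (n : nat) (k : nat) : R :=
  gamma * V k delta + B k n delta.

(* Main.v *)
Require Import Defs.
From HB Require Import structures.
From mathcomp Require Import all_boot all_order all_algebra.
From mathcomp Require Import all_classical all_reals all_analysis.
From mathcomp Require Import lra.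
Import Order.TTheory GRing.Theory Num.Theory.
Local Open Scope ring_scope.

Lemma bigmax_mem_aux (s : seq nat) (Pr : pred nat) :
  let m := \max_(k <- s | Pr k) k in m = 0%N \/ (m \in s /\ Pr m).
Proof.
rewrite /=; rewrite big_seq_cond.
apply: (big_ind (fun m => m = 0%N \/ (m \in s /\ Pr m))).
- by left.
- move=> x y Hx Hy; rewrite /maxn; by case: ltnP.
- by move=> i /andP[Hi Pi]; right.
Qed.

Theorem proposition2 (R : realType) (d : measure_display)
  (Omega : measurableType d) (P : probability Omega R)
  (gamma : R) (n : nat) (ghat : nat -> Omega -> R)
  (V : nat -> R -> R) (B : nat -> nat -> R -> R)
  (delta : R) (K : seq nat) :
  0 < gamma -> (1 <= n)%N ->
  (forall k, (1 <= k <= n)%N -> measurable_fun setT (ghat k)) ->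
  bias_variance_condition P gamma n ghat V B ->
  0 < delta < 1 ->
  K != [::] -> all (fun k => 1 <= k <= n)%N K ->
  sufficiently_wide_grid gamma V B delta n K ->
  forall k : nat, (1 <= k <= kstar gamma V B delta n K)%N ->
    Err gamma V B delta n k <=
      \big[Order.min/Err gamma V B delta n 1%N]_(1 <= j < n.+1) Err gamma V B delta n j
      + gamma * V k delta.
Proof.
move=> g0 n1 _ [V0 [B0 [_ [HV HB]]]] hd _ _ _ k /andP[k1 kks].
have [Vmon _] := HV delta hd.
have [Bmon _] := HB delta hd.
have ks1 : (1 <= kstar gamma V B delta n K)%N by apply: leq_trans kks.
have [ks0|[_ Pks]] := bigmax_mem_aux K
   (fun k => B k n delta <= gamma * V k delta).
  by rewrite /kstar ks0 in ks1.
set ks := kstar gamma V B delta n K in kks ks1 Pks *.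
have key : forall j, (1 <= j)%N -> B k n delta <= Err gamma V B delta n j.
  move=> j j1; rewrite /Err.
  case: (leqP j k) => hjk.
  - have h1 : B k n delta <= B ks n delta by apply: Bmon => //; rewrite k1.
    have h2 : gamma * V ks delta <= gamma * V j delta.
      apply: ler_wpM2l; first exact: ltW.
      apply: Vmon; rewrite j1 /=; exact: leq_trans hjk kks.
    have h3 := B0 j n delta j1 n1 hd.
    have := le_trans h1 Pks. move=> h4. lra.
  - have h1 : B k n delta <= B j n delta by apply: Bmon => //; rewrite k1 ltnW.
    have h3 : 0 <= gamma * V j delta by apply: mulr_ge0; [exact: ltW| exact: V0].
    lra.
have : B k n delta <=
   \big[Order.min/Err gamma V B delta n 1%N]_(1 <= j < n.+1) Err gamma V B delta n j.
  rewrite big_seq_cond.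
  apply: (big_ind (fun m => B k n delta <= m)).
  - exact: key.
  - by move=> x y hx hy; rewrite le_min hx hy.
  - move=> i /andP[]; rewrite mem_index_iota => /andP[i1 _] _; exact: key.
rewrite /Err; lra.
Qed.
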